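(* Let $\alpha\geq1$ and $\phi(x):=(1+|x|^2)^{-\alpha}$ on $\mathbb{R}^3$. Then there is a constant $C$ such that for every $x,y\in\mathbb{R}^3$, $$\sup_{s\in[0,1]}|\nabla\phi(x-sy)|\leq C\alpha(1+|y|^{2\alpha})|\phi(x)|.$$ *)

(* Defs.v *)
From HB Require Import structures.
From mathcomp Require Import all_boot all_order all_algebra.
From mathcomp Require Import all_classical all_reals all_analysis.
Set Implicit Arguments. Unset Strict Implicit. Unset Printing Implicit Defensive.
Import Order.TTheory GRing.Theory Num.Theory.
Import numFieldNormedType.Exports.
Local Open Scope ring_scope.

(* Euclidean norm |v| on R^3 (the library norm on matrices is the sup-norm). *)
Definition enorm {R : realType} (v : 'rV[R]_3) : R :=
  Num.sqrt (\sum_(i < 3) (v ord0 i) ^+ 2).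

Definition phi {R : realType} (alpha : R) (x : 'rV[R]_3) : R :=
  (1 + enorm x ^+ 2) `^ (- alpha).

Definition grad_norm {R : realType} (f : 'rV[R]_3 -> R) (z : 'rV[R]_3) : R :=
  Num.sqrt (\sum_(i < 3) ('D_(delta_mx ord0 i) f z) ^+ 2).

(* Main.v *)
Require Import Defs.
From HB Require Import structures.
From mathcomp Require Import all_boot all_order all_algebra.
From mathcomp Require Import all_classical all_reals all_analysis.
From mathcomp Require Import lra.
Import Order.TTheory GRing.Theory Num.Theory.
Import numFieldNormedType.Exports.
Local Open Scope ring_scope.

Section S.
Context {R : realType}.

Definition nsq (v : 'rV[R]_3) : R := \sum_(j < 3) (v ord0 j) ^+ 2.

Lemma nsq_ge0 v : 0 <= nsq v.
Proof. by apply: sumr_ge0 => j _; exact: sqr_ge0. Qed.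

Lemma enorm2 v : enorm v ^+ 2 = nsq v.
Proof. by rewrite /enorm sqr_sqrtr // nsq_ge0. Qed.

Lemma D1 (f : 'rV[R]_3 -> R) (v z : 'rV[R]_3) :
  'D_v f z = 'D_1 (fun t : R => f (t *: v + z)) 0.
Proof.
rewrite /derive; set a := (fun _ => _); set b := (fun _ => _).
suff -> : a = b by [].
apply/funext => h; rewrite /a /b /=.
by rewrite scale0r add0r [h *: (1:R)]mulr1 ?addr0.
Qed.

Lemma nsq_shift (z : 'rV[R]_3) i t :
  nsq (t *: delta_mx ord0 i + z) =
  (\sum_(j < 3 | j != i) z ord0 j ^+ 2) + (t + z ord0 i) ^+ 2.
Proof.
rewrite /nsq (bigD1 i) //= addrC; congr (_ + _).
  by apply: eq_bigr => j ji; rewrite !mxE (negbTE ji) /= mulr0 add0r.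
by rewrite !mxE !eqxx /= mulr1.
Qed.

Lemma dq (c zi : R) : is_derive (0:R) (1:R) (fun t : R => c + (t + zi) ^+ 2) (2 * zi).
Proof.
apply: is_derive_eq.
by rewrite !(add0r,addr0,mul1r) -[zi *: 1]/(zi * 1) mulr1 -mulr2n mulr_natl.
Qed.

Lemma Dphi alpha (z : 'rV[R]_3) i :
  'D_(delta_mx ord0 i) (phi alpha) z =
  (- alpha * (1 + nsq z) `^ (- alpha - 1)) * (2 * z ord0 i).
Proof.
rewrite D1.
set c := 1 + \sum_(j < 3 | j != i) z ord0 j ^+ 2.
have hq : 1 + nsq z = c + (0 + z ord0 i) ^+ 2.
  by rewrite -[z in LHS](add0r) -(scale0r (delta_mx ord0 i)) nsq_shift addrA.
have -> : (fun t : R => phi alpha (t *: delta_mx ord0 i + z)) =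
  (fun r => r `^ (- alpha)) \o (fun t : R => c + (t + z ord0 i) ^+ 2).
  by apply/funext => t; rewrite /phi /= enorm2 nsq_shift addrA.
have hpos : 0 < c + (0 + z ord0 i) ^+ 2.
  by rewrite -hq ltr_wpDr ?nsq_ge0.
have := @is_derive1_comp R (fun r => r `^ (- alpha)) (fun t : R => c + (t + z ord0 i) ^+ 2) 0 _ _ (is_derive1_powR (- alpha) hpos) (dq c (z ord0 i)).
by move=> H; rewrite hq; apply: (@derive_val _ _ _ _ _ _ _ H).
Qed.

Lemma phiE alpha z : phi alpha z = (1 + nsq z) `^ (- alpha).
Proof. by rewrite /phi enorm2. Qed.

Lemma sq_le_nsq (z : 'rV[R]_3) i : z ord0 i ^+ 2 <= nsq z.
Proof.
rewrite /nsq (bigD1 i) //= lerDl; apply: sumr_ge0 => j _; exact: sqr_ge0.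
Qed.

Lemma Dphi_bound alpha (z : 'rV[R]_3) i : 0 <= alpha ->
  `|'D_(delta_mx ord0 i) (phi alpha) z| <= alpha * phi alpha z.
Proof.
move=> ha; rewrite Dphi phiE.
set q := 1 + nsq z.
have q1 : 1 <= q by rewrite lerDl nsq_ge0.
have q0 : 0 < q by lra.
have hq : q `^ (- alpha) = q `^ (- alpha - 1) * q.
  rewrite -{3}(powRr1 (ltW q0)) -powRD; first by congr (_ `^ _); lra.
  by apply/implyP => _; rewrite gt_eqF.
have h2 : 2 * `|z ord0 i| <= q.
  have := sq_le_nsq z i; rewrite /q -real_normK ?num_real //.
  move: (normr_ge0 (z ord0 i)) => n0 hh; have := sqr_ge0 (`|z ord0 i| - 1); nra.
rewrite hq !normrM normrN (ger0_norm ha) ger0_norm ?powR_ge0 //.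
rewrite (ger0_norm (ler0n _ 2)) -mulrA ler_wpM2l //.
by rewrite ler_wpM2l ?powR_ge0.
Qed.

Lemma grad_bound alpha (z : 'rV[R]_3) : 0 <= alpha ->
  grad_norm (phi alpha) z <= 2 * alpha * phi alpha z.
Proof.
move=> ha; set B := alpha * phi alpha z.
have B0 : 0 <= B by rewrite mulr_ge0 // phiE powR_ge0.
have hi : forall i, ('D_(delta_mx ord0 i) (phi alpha) z) ^+ 2 <= B ^+ 2.
  move=> i; have h := Dphi_bound alpha z i ha.
  rewrite -real_normK ?num_real //; apply: lerXn2r => //.
rewrite /grad_norm -[2 * alpha * _]mulrA -/B.
have B2 : 0 <= 2 * B by rewrite mulr_ge0.
rewrite -(ger0_norm B2) -sqrtr_sqr ler_sqrt; last by apply: sqr_ge0.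
apply: le_trans (ler_sum _ (fun i _ => hi i)) _.
rewrite sumr_const card_ord -mulr_natr.
have := sqr_ge0 B.
nra.
Qed.

Lemma nsq_add (a b : 'rV[R]_3) : nsq (a + b) <= 2 * nsq a + 2 * nsq b.
Proof.
rewrite /nsq !mulr_sumr -big_split /=; apply: ler_sum => j _.
rewrite mxE; have := sqr_ge0 (a ord0 j - b ord0 j); nra.
Qed.

Lemma nsq_scale (s : R) (y : 'rV[R]_3) : 0 <= s <= 1 -> nsq (s *: y) <= nsq y.
Proof.
move=> /andP[s0 s1]; rewrite /nsq; apply: ler_sum => j _.
rewrite mxE exprMn; apply: ler_piMl; first exact: sqr_ge0.
nra.
Qed.

Lemma pow_split (Y alpha : R) : 0 <= Y -> 0 <= alpha ->
  (1 + Y) `^ alpha <= 2 `^ alpha * (1 + Y `^ alpha).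
Proof.
move=> Y0 a0.
have t0 : 0 <= 2 `^ alpha by apply: powR_ge0.
have y0 : 0 <= Y `^ alpha by apply: powR_ge0.
case: (lerP Y 1) => hY.
  apply: (@le_trans _ _ (2 `^ alpha)).
    apply: ge0_ler_powR => //; rewrite ?qualifE /=; try lra.
  have := mulr_ge0 t0 y0; lra.
apply: (@le_trans _ _ ((2 * Y) `^ alpha)).
  by apply: ge0_ler_powR => //; rewrite ?qualifE /=; lra.
rewrite powRM //; last by lra.
Qed.

Lemma peetre alpha (x w : 'rV[R]_3) (K : R) : 0 <= alpha ->
  1 + nsq x <= (1 + nsq (x - w)) * K ->
  phi alpha (x - w) <= K `^ alpha * phi alpha x.
Proof.
move=> a0 hA; rewrite !phiE !powRN.
set A := 1 + nsq x in hA *; set B := 1 + nsq (x - w) in hA *.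
have A1 : 1 <= A by rewrite lerDl nsq_ge0.
have B1 : 1 <= B by rewrite lerDl nsq_ge0.
have K0 : 0 <= K.
  have : 0 <= B * K by lra.
  by rewrite pmulr_rge0 //; lra.
have Aa : 0 < A `^ alpha by apply: powR_gt0; lra.
have Ba : 0 < B `^ alpha by apply: powR_gt0; lra.
rewrite ler_pdivlMr // mulrC ler_pdivrMr //.
rewrite mulrC -powRM //; last by lra.
by apply: ge0_ler_powR => //; rewrite ?qualifE /=; nra.
Qed.
End S.

Theorem lemmaA1 (R : realType) (alpha : R) (halpha : 1 <= alpha) :
  exists C : R, forall (x y : 'rV[R]_3) (s : R), 0 <= s <= 1 ->
    grad_norm (phi alpha) (x - s *: y)
      <= C * alpha * (1 + enorm y `^ (2 * alpha)) * `|phi alpha x|.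
Proof.
have a0 : 0 <= alpha by lra.
exists (2 * 2 `^ alpha * 2 `^ alpha) => x y s hs.
set Y := nsq y.
have Y0 : 0 <= Y by apply: nsq_ge0.
have hY : enorm y `^ (2 * alpha) = Y `^ alpha.
  rewrite powRrM powR_mulrn ?enorm2 //; exact: sqrtr_ge0.
rewrite hY ger0_norm; last by rewrite phiE powR_ge0.
have hp : phi alpha (x - s *: y) <= (2 * (1 + Y)) `^ alpha * phi alpha x.
  apply: peetre => //.
  have := nsq_add (x - s *: y) (s *: y); rewrite subrK.
  have := nsq_scale s y hs; rewrite -/Y.
  have := nsq_ge0 (x - s *: y); have := nsq_ge0 (s *: y).
  set u := nsq (x - s *: y); set v := nsq (s *: y); nra.
have hg := grad_bound alpha (x - s *: y) a0.
have t0 : 0 <= 2 `^ alpha by apply: powR_ge0.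
have f0 : 0 <= phi alpha x by rewrite phiE powR_ge0.
have ps := pow_split Y alpha Y0 a0.
rewrite powRM // in hp; last by lra.
have := mulr_ge0 (mulr_ge0 t0 f0) (powR_ge0 (1 + Y) alpha).
have := mulr_ge0 t0 (mulr_ge0 f0 (powR_ge0 (1 + Y) alpha)).
set P := (1 + Y) `^ alpha in hp ps *; set Q := Y `^ alpha in ps *.
set T := 2 `^ alpha in hp ps t0 *; set F := phi alpha x in hp f0 *.
set G := phi alpha (x - s *: y) in hp hg *.
set D := grad_norm _ _ in hg *.
move=> h1 h2.
have : 2 * alpha * G <= 2 * alpha * (T * P * F) by apply: ler_wpM2l => //; lra.
have : T * P * F <= T * (T * (1 + Q)) * F.
  by apply: ler_wpM2r => //; apply: ler_wpM2l.
nra.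
Qed.
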